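(* Let $p,q$ satisfy $\frac1p+\frac1q=1$, and let $(\hat f(j,k))_{(j,k)\in\mathbb{Z}^2}\in \ell^q(\mathbb{Z}^2)$. Define, for $(j,k)\in\mathbb{Z}^2$ with $2j\neq\pm k$, $\hat u(j,k)=\frac{\hat f(j,k)}{4j^2-k^2}$, and let \[ u(x,t)=\sum_{(j,k)\in\mathbb{Z}^2,\ 2j\neq \pm k}\hat u(j,k)e^{2ijx+ikt}. \] Then $u\in C^{\gamma}$ for every $\gamma$ with $0<\gamma<1-\frac1p$.
   Context: $\ell^q=\{(\hat u(j,k))_{(j,k)\in\mathbb{Z}^2}:\sum_{(j,k)}|\hat u(j,k)|^q<\infty\}$. $C^\gamma$ denotes the space of $\gamma$-Hölder continuous functions of $(x,t)$, $\pi$-periodic in $x$ and $2\pi$-periodic in $t$. *)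

(* Defs.v *)
From Stdlib Require Import Reals ZArith.
From Coquelicot Require Import Coquelicot.
Open Scope R_scope.

(* a^s for a >= 0 and s > 0, with the convention 0^s = 0 *)
Definition rpow (a s : R) : R := if Rle_dec a 0 then 0 else Rpower a s.

Definition zsum (N : nat) (g : Z -> C) : C :=
  sum_n (fun a : nat => g (Z.of_nat a - Z.of_nat N)%Z) (2 * N).

Definition zsumR (N : nat) (g : Z -> R) : R :=
  sum_n (fun a : nat => g (Z.of_nat a - Z.of_nat N)%Z) (2 * N).

(* f in l^q(Z^2): sum of |f(j,k)|^q over Z^2 is finite
   (nonnegative terms: square partial sums are bounded) *)
Definition in_lq_Z2 (q : R) (f : Z -> Z -> C) : Prop :=
  exists M : R, forall N : nat,
    zsumR N (fun j => zsumR N (fun k => rpow (Cmod (f j k)) q)) <= M.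

Definition cexpi (theta : R) : C := (cos theta, sin theta).

(* \hat u(j,k) = \hat f(j,k)/(4j^2-k^2) if 2j <> +-k; these indices are
   excluded from the sum (coefficient set to 0 there). *)
Definition resonant (j k : Z) : bool :=
  (Z.eqb (2 * j) k || Z.eqb (2 * j) (- k))%bool.

Definition uhat (f : Z -> Z -> C) (j k : Z) : C :=
  if resonant j k then 0%C
  else Cdiv (f j k) (RtoC (IZR (4 * j * j - k * k)%Z)).

Definition u_partial (f : Z -> Z -> C) (N : nat) (x t : R) : C :=
  zsum N (fun j => zsum N (fun k =>
    Cmult (uhat f j k) (cexpi (2 * IZR j * x + IZR k * t)))).

Definition holder (gamma : R) (u : R -> R -> C) : Prop :=
  exists K : R, 0 <= K /\ forall x t x' t' : R,
    Cmod (Cminus (u x t) (u x' t')) <=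
      K * rpow (sqrt ((x - x') ^ 2 + (t - t') ^ 2)) gamma.

Definition C_gamma (gamma : R) (u : R -> R -> C) : Prop :=
  holder gamma u /\
  (forall x t, u (x + PI) t = u x t) /\
  (forall x t, u x (t + 2 * PI) = u x t).

(* Main.v *)
Require Import Defs.
From Stdlib Require Import Reals ZArith.
From Coquelicot Require Import Coquelicot.
From Stdlib Require Import List Lra Lia Psatz.
From Stdlib Require FinFun.
From Stdlib Require Import ClassicalEpsilon FunctionalExtensionality.
Open Scope R_scope.

Lemma expLe x y : x <= y -> exp x <= exp y.
Proof. intros [H|H]; [left; apply exp_increasing; auto| subst; lra]. Qed.

Lemma exp_ge z : 1 + z <= exp z.
Proof. destruct (Req_dec z 0) as [->|H]; [rewrite exp_0; lra| left; apply exp_ineq1; auto]. Qed.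

Lemma ln_le_sub1 y : 0 < y -> ln y <= y - 1.
Proof. intros Hy. rewrite <- (ln_exp (y-1)). apply ln_le; auto. pose proof (exp_ge (y-1)); lra. Qed.

Lemma rpow_ge0 a s : 0 <= rpow a s.
Proof. unfold rpow. destruct (Rle_dec a 0); [lra| unfold Rpower; left; apply exp_pos]. Qed.

Lemma rpow_pos a s : 0 < a -> rpow a s = exp (s * ln a).
Proof. intros H. unfold rpow. destruct (Rle_dec a 0); [lra| reflexivity]. Qed.

Lemma rpow_0 s : rpow 0 s = 0.
Proof. unfold rpow. destruct (Rle_dec 0 0); [reflexivity| lra]. Qed.

Lemma young p q x Y : 0 < p -> 0 < q -> / p + / q = 1 -> 0 <= x ->
  x * exp Y <= rpow x q + exp (p * Y).
Proof.
  intros Hp Hq Hpq Hx.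
  destruct Hx as [Hx|<-].
  2:{ rewrite rpow_0. pose proof (exp_pos (p*Y)). lra. }
  rewrite rpow_pos by auto.
  rewrite <- (exp_ln x) at 1 by auto. rewrite <- exp_plus.
  set (X := ln x).
  assert (Hq1 : q - 1 = q / p).
  { assert (E: /p = 1 - /q) by lra. unfold Rdiv. rewrite E. field. lra. }
  assert (Hp1 : p - 1 = p / q).
  { assert (E: /q = 1 - /p) by lra. unfold Rdiv. rewrite E. field. lra. }
  pose proof (exp_pos (q*X)). pose proof (exp_pos (p*Y)).
  destruct (Rle_dec (p*Y) (q*X)) as [Hc|Hc].
  - assert (Y <= (q - 1) * X).
    { rewrite Hq1. apply (Rmult_le_reg_l p); auto. replace (p * (q/p*X)) with (q*X) by (field; lra). lra. }
    assert (HH: X + Y <= q * X) by lra. apply expLe in HH. lra.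
  - assert (X <= (p - 1) * Y).
    { rewrite Hp1. apply (Rmult_le_reg_l q); auto. replace (q * (p/q*Y)) with (p*Y) by (field; lra). lra. }
    assert (HH: X + Y <= p * Y) by lra. apply expLe in HH. lra.
Qed.

Lemma tele s x : 1 < s -> 1 <= x ->
  (s - 1) * exp (- s * ln (x + 1)) <= exp ((1 - s) * ln x) - exp ((1 - s) * ln (x + 1)).
Proof.
  intros Hs Hx.
  set (L := ln (x+1)). set (l := ln x).
  assert (HLl : / (x+1) <= L - l).
  { unfold L, l. assert (ln (x / (x+1)) <= x/(x+1) - 1) by (apply ln_le_sub1; apply Rdiv_lt_0_compat; lra).
    unfold Rdiv in H. rewrite ln_mult in H by (try apply Rinv_0_lt_compat; lra).
    rewrite ln_Rinv in H by lra.
    replace (x * / (x+1) - 1) with (- / (x+1)) in H by (field; lra). lra. }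
  assert (E1 : exp (- s * L) = exp ((1-s)*L) * / (x+1)).
  { replace (-s * L) with ((1-s)*L + - L) by ring. rewrite exp_plus. unfold L. rewrite exp_Ropp, exp_ln by lra. reflexivity. }
  assert (E2 : exp ((1-s)*l) = exp ((1-s)*L) * exp ((s-1)*(L-l))).
  { rewrite <- exp_plus. f_equal. ring. }
  rewrite E1, E2.
  pose proof (exp_ge ((s-1)*(L-l))).
  pose proof (exp_pos ((1-s)*L)).
  assert ((s-1) * / (x+1) <= (s-1)*(L-l)) by (apply Rmult_le_compat_l; lra).
  assert (exp ((1-s)*L) * ((s-1) * / (x+1)) <= exp ((1-s)*L) * (exp ((s - 1) * (L - l)) - 1)).
  { apply Rmult_le_compat_l; lra. }
  nra.
Qed.

Definition zs {G : AbelianMonoid} (N : nat) (g : Z -> G) : G :=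
  sum_n (fun a : nat => g (Z.of_nat a - Z.of_nat N)%Z) (2 * N).

Lemma zsum_zs N g : zsum N g = zs N g. Proof. reflexivity. Qed.
Lemma zsumR_zs N g : zsumR N g = zs N g. Proof. reflexivity. Qed.

Lemma zs_S {G : AbelianMonoid} N (g : Z -> G) :
  zs (S N) g = plus (g (- Z.of_nat (S N))%Z) (plus (zs N g) (g (Z.of_nat (S N)))).
Proof.
  unfold zs. replace (2 * S N)%nat with (S (S (2 * N))) by lia.
  rewrite sum_Sn. unfold sum_n. rewrite sum_Sn_m by lia.
  rewrite <- sum_n_m_S. rewrite plus_assoc. f_equal.
  - apply f_equal2; [f_equal; lia|]. apply sum_n_m_ext. intros n. f_equal. lia.
  - f_equal. lia.
Qed.

Definition Gs (s : R) (a : Z) : R :=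
  if Z.eq_dec a 0 then 0 else exp (- s * ln (Rabs (IZR a))).

Lemma Gs_ge0 s a : 0 <= Gs s a.
Proof. unfold Gs. destruct Z.eq_dec; [lra| left; apply exp_pos]. Qed.

Lemma Gs_pos s n : Gs s (Z.of_nat (S n)) = exp (- s * ln (INR (S n))).
Proof.
  unfold Gs. destruct Z.eq_dec; [lia|]. rewrite <- INR_IZR_INZ.
  rewrite Rabs_pos_eq by apply pos_INR. reflexivity.
Qed.

Lemma Gs_neg s n : Gs s (- Z.of_nat (S n))%Z = exp (- s * ln (INR (S n))).
Proof.
  unfold Gs. destruct Z.eq_dec; [lia|]. rewrite opp_IZR, Rabs_Ropp, <- INR_IZR_INZ.
  rewrite Rabs_pos_eq by apply pos_INR. reflexivity.
Qed.

Lemma plusR (x y : R) : plus x y = x + y. Proof. reflexivity. Qed.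

Lemma zs_S_R N (g : Z -> R) :
  zs (S N) g = g (- Z.of_nat (S N))%Z + zs N g + g (Z.of_nat (S N)).
Proof. rewrite zs_S, !plusR, Rplus_assoc. reflexivity. Qed.

Lemma zs_ge0 N (g : Z -> R) : (forall z, 0 <= g z) -> 0 <= zs N g.
Proof.
  intros H. unfold zs. replace 0 with (sum_n_m (fun _ => 0) 0 (2*N)).
  unfold sum_n. apply sum_n_m_le. intros; apply H. apply (@sum_n_m_const_zero R_AbelianMonoid).
Qed.

Lemma pseries s M : 1 < s -> zs M (Gs s) <= 2 + 2 / (s - 1).
Proof.
  intros Hs.
  assert (Hp : 0 < s - 1) by lra.
  assert (H : forall M0, zs (S M0) (Gs s) <= 2 + 2 * (1 - exp ((1-s) * ln (INR (S M0)))) / (s-1)).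
  { induction M0 as [|K IH].
    - rewrite zs_S_R. rewrite Gs_pos, Gs_neg. unfold zs. simpl sum_n.
      rewrite sum_O. simpl INR. rewrite ln_1, !Rmult_0_r, exp_0.
      unfold Gs. destruct Z.eq_dec; [|simpl in n; lia]. unfold Rdiv. lra.
    - rewrite zs_S_R, Gs_pos, Gs_neg.
      pose proof (tele s (INR (S K)) Hs).
      assert (1 <= INR (S K)) by (rewrite S_INR; pose proof (pos_INR K); lra).
      specialize (H H0). rewrite <- S_INR in H.
      assert (E: exp (- s * ln (INR (S (S K)))) <= (exp ((1 - s) * ln (INR (S K))) -
          exp ((1 - s) * ln (INR (S (S K))))) / (s-1)).
      { apply (Rmult_le_reg_l (s-1)); auto. unfold Rdiv. 
        replace ((s - 1) * ((exp ((1 - s) * ln (INR (S K))) - exp ((1 - s) * ln (INR (S (S K))))) * / (s - 1)))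
          with (exp ((1 - s) * ln (INR (S K))) - exp ((1 - s) * ln (INR (S (S K))))) by (field; lra).
        lra. }
      unfold Rdiv in *. 
      assert (2 * (1 - exp ((1 - s) * ln (INR (S K)))) * / (s - 1) + 2 * ((exp ((1 - s) * ln (INR (S K))) -
          exp ((1 - s) * ln (INR (S (S K))))) * / (s - 1)) = 2 * (1 - exp ((1 - s) * ln (INR (S (S K))))) * / (s - 1)) by (field; lra).
      lra. }
  destruct M as [|M].
  - unfold zs. simpl. rewrite sum_O. unfold Gs. destruct Z.eq_dec; [|simpl in n; lia].
    assert (0 < 2 / (s-1)) by (apply Rdiv_lt_0_compat; lra). lra.
  - specialize (H M). pose proof (exp_pos ((1 - s) * ln (INR (S M)))).
    assert (2 * (1 - exp ((1 - s) * ln (INR (S M)))) / (s - 1) <= 2 / (s-1)).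
    { unfold Rdiv. apply Rmult_le_compat_r. left; apply Rinv_0_lt_compat; lra. lra. }
    lra.
Qed.

Definition lsum {X} (l : list X) (g : X -> R) : R := fold_right (fun x acc => g x + acc) 0 l.

Lemma lsum_app {X} (l1 l2 : list X) g : lsum (l1 ++ l2) g = lsum l1 g + lsum l2 g.
Proof. induction l1; simpl; [ring| rewrite IHl1; ring]. Qed.

Lemma lsum_map {X Y} (h : X -> Y) l g : lsum (map h l) g = lsum l (fun x => g (h x)).
Proof. induction l; simpl; [ring| rewrite IHl; ring]. Qed.

Lemma lsum_flat_map {X Y} (F : X -> list Y) l g :
  lsum (flat_map F l) g = lsum l (fun x => lsum (F x) g).
Proof. induction l; simpl; [ring| rewrite lsum_app, IHl; ring]. Qed.

Lemma lsum_mult_l {X} (l : list X) c g : lsum l (fun x => c * g x) = c * lsum l g.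
Proof. induction l; simpl; [ring| rewrite IHl; ring]. Qed.

Lemma lsum_ext {X} (l : list X) g g' : (forall x, g x = g' x) -> lsum l g = lsum l g'.
Proof. intros H; induction l; simpl; [ring| rewrite IHl, H; ring]. Qed.

Lemma lsum_ge0 {X} (l : list X) g : (forall x, 0 <= g x) -> 0 <= lsum l g.
Proof. intros H; induction l; simpl; [lra| pose proof (H a); lra]. Qed.

Lemma lsum_incl {X} (l1 l2 : list X) g : (forall x, 0 <= g x) ->
  NoDup l1 -> incl l1 l2 -> lsum l1 g <= lsum l2 g.
Proof.
  intros Hg. revert l2. induction l1 as [|a l1 IH]; intros l2 Hnd Hi.
  - simpl. apply lsum_ge0; auto.
  - inversion Hnd as [|? ? Ha Hnd']; subst.
    assert (Hin : In a l2) by (apply Hi; left; auto).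
    destruct (in_split _ _ Hin) as [u [v ->]].
    rewrite lsum_app. simpl.
    assert (lsum l1 g <= lsum (u ++ v) g).
    { apply IH; auto. intros x Hx. assert (Hx2 : In x (u ++ a :: v)) by (apply Hi; right; auto).
      apply in_app_or in Hx2. apply in_or_app. destruct Hx2 as [H|[H|H]]; auto.
      subst; contradiction. }
    rewrite lsum_app in H. lra.
Qed.

Lemma sum_n_lsum (a : nat -> R) n : sum_n a n = lsum (seq 0 (S n)) a.
Proof.
  induction n.
  - rewrite sum_O. simpl. ring.
  - rewrite sum_Sn, plusR, IHn. rewrite (seq_S (S n)), lsum_app. simpl. ring.
Qed.

Definition zr (N : nat) : list Z := map (fun a => Z.of_nat a - Z.of_nat N)%Z (seq 0 (S (2 * N))).

Lemma zs_lsum N (g : Z -> R) : zs N g = lsum (zr N) g.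
Proof. unfold zs, zr. rewrite sum_n_lsum, lsum_map. reflexivity. Qed.

Lemma in_zr N z : In z (zr N) <-> (- Z.of_nat N <= z <= Z.of_nat N)%Z.
Proof.
  unfold zr. rewrite in_map_iff. split.
  - intros [a [<- Ha]]. apply in_seq in Ha. lia.
  - intros H. exists (Z.to_nat (z + Z.of_nat N)). split; [lia|]. apply in_seq. lia.
Qed.

Lemma NoDup_zr N : NoDup (zr N).
Proof.
  unfold zr. apply FinFun.Injective_map_NoDup; [|apply seq_NoDup].
  intros a b H. lia.
Qed.

Lemma NoDup_flat_map {X Y} (F : X -> list Y) l : NoDup l -> (forall x, NoDup (F x)) ->
  (forall x y z, x <> y -> In z (F x) -> ~ In z (F y)) -> NoDup (flat_map F l).
Proof.
  intros Hl HF Hd. induction l as [|a l IH]; simpl; [constructor|].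
  inversion Hl; subst. apply NoDup_app; auto.
  intros z Hz Hz'. apply in_flat_map in Hz'. destruct Hz' as [y [Hy Hzy]].
  apply (Hd a y z); auto. intros ->; contradiction.
Qed.

Lemma reindex s N : zs N (fun j => zs N (fun k => Gs s (2*j-k)%Z * Gs s (2*j+k)%Z))
  <= (zs (3 * N) (Gs s)) ^ 2.
Proof.
  rewrite zs_lsum. rewrite (lsum_ext _ _ (fun j => lsum (zr N) (fun k => Gs s (2*j-k)%Z * Gs s (2*j+k)%Z)))
    by (intros; apply zs_lsum).
  set (H := fun ab : Z * Z => Gs s (fst ab) * Gs s (snd ab)).
  set (phi := fun j k : Z => (2*j-k, 2*j+k)%Z).
  rewrite (lsum_ext _ _ (fun j => lsum (map (phi j) (zr N)) H)).
  2:{ intros j. rewrite lsum_map. reflexivity. }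
  rewrite <- lsum_flat_map.
  eapply Rle_trans.
  { apply (lsum_incl _ (flat_map (fun a => map (pair a) (zr (3*N))) (zr (3*N)))).
    - intros [a b]; unfold H; simpl. apply Rmult_le_pos; apply Gs_ge0.
    - apply NoDup_flat_map; [apply NoDup_zr| |].
      + intros j. apply FinFun.Injective_map_NoDup; [|apply NoDup_zr].
        intros k k' E. unfold phi in E. injection E. lia.
      + intros j j' z Hjj' Hz Hz'. apply in_map_iff in Hz, Hz'.
        destruct Hz as [k [<- _]]. destruct Hz' as [k' [E _]]. unfold phi in E. pose proof (f_equal fst E) as E1; pose proof (f_equal snd E) as E2; cbn [fst snd] in E1, E2. lia.
    - intros [a b] Hab. apply in_flat_map in Hab. destruct Hab as [j [Hj Hab]].
      apply in_map_iff in Hab. destruct Hab as [k [E Hk]]. unfold phi in E. pose proof (f_equal fst E) as E1; pose proof (f_equal snd E) as E2; cbn [fst snd] in E1, E2.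
      apply in_zr in Hj, Hk. apply in_flat_map. exists a. split.
      + apply in_zr. lia.
      + apply in_map_iff. exists b. split; auto. apply in_zr. lia. }
  rewrite lsum_flat_map.
  rewrite (lsum_ext _ _ (fun a => Gs s a * lsum (zr (3*N)) (Gs s))).
  2:{ intros a. rewrite lsum_map. unfold H. cbn [fst snd]. apply lsum_mult_l. }
  rewrite (lsum_ext _ _ (fun a => lsum (zr (3*N)) (Gs s) * Gs s a)) by (intros; ring).
  rewrite lsum_mult_l, zs_lsum. right; ring.
Qed.

Definition Dz {G : AbelianMonoid} (N : nat) (h : Z -> Z -> G) : G := zs N (fun j => zs N (h j)).

Lemma zs_ext {G : AbelianMonoid} N (g g' : Z -> G) : (forall z, g z = g' z) -> zs N g = zs N g'.
Proof. intros H. unfold zs. apply sum_n_ext. intros; apply H. Qed.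

Lemma zs_plus {G : AbelianMonoid} N (g g' : Z -> G) : zs N (fun z => plus (g z) (g' z)) = plus (zs N g) (zs N g').
Proof. unfold zs. apply sum_n_plus. Qed.

Lemma plus_swap {G : AbelianMonoid} (a b c : G) : plus a (plus b c) = plus b (plus a c).
Proof. rewrite !plus_assoc, (plus_comm a b). reflexivity. Qed.

Definition E {G : AbelianMonoid} (N : nat) (h : Z -> Z -> G) : G :=
  plus (zs (S N) (fun j => plus (h j (- Z.of_nat (S N))%Z) (h j (Z.of_nat (S N)))))
       (plus (zs N (h (- Z.of_nat (S N))%Z)) (zs N (h (Z.of_nat (S N))))).

Lemma D_S {G : AbelianMonoid} N (h : Z -> Z -> G) : Dz (S N) h = plus (Dz N h) (E N h).
Proof.
  unfold Dz, E.
  rewrite (zs_ext _ _ (fun j => plus (plus (h j (- Z.of_nat (S N))%Z) (h j (Z.of_nat (S N)))) (zs N (h j)))).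
  2:{ intros j. rewrite zs_S, plus_swap, plus_comm. reflexivity. }
  rewrite zs_plus, (zs_S N (fun j => zs N (h j))).
  set (A := zs (S N) _). set (B := zs N (h _)). set (C0 := zs N (h (Z.of_nat (S N)))).
  set (X := zs N (fun j => zs N (h j))).
  rewrite (plus_swap B X C0). rewrite (plus_swap A X). reflexivity.
Qed.

Section NormSec.
Context {K : AbsRing} {V : NormedModule K}.

Lemma zs_norm N (g : Z -> V) : norm (zs N g) <= zs N (fun z => norm (g z)).
Proof. unfold zs, sum_n. apply norm_sum_n_m. Qed.

End NormSec.

Lemma zs_le N (g g' : Z -> R) : (forall z, g z <= g' z) -> zs N g <= zs N g'.
Proof. intros H. unfold zs, sum_n. apply sum_n_m_le. intros; apply H. Qed.

Lemma D_le N (g g' : Z -> Z -> R) : (forall j k, g j k <= g' j k) -> Dz N g <= Dz N g'.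
Proof. intros H. unfold Dz. apply zs_le. intros j. apply zs_le. auto. Qed.

Lemma D_ge0 N (g : Z -> Z -> R) : (forall j k, 0 <= g j k) -> 0 <= Dz N g.
Proof. intros H. unfold Dz. apply zs_ge0. intros j. apply zs_ge0. auto. Qed.

Lemma ER N (g : Z -> Z -> R) : E N g =
  zs (S N) (fun j => g j (- Z.of_nat (S N))%Z + g j (Z.of_nat (S N))) +
  (zs N (g (- Z.of_nat (S N))%Z) + zs N (g (Z.of_nat (S N)))).
Proof. reflexivity. Qed.

Lemma E_ge0 N (g : Z -> Z -> R) : (forall j k, 0 <= g j k) -> 0 <= E N g.
Proof.
  intros H. rewrite ER.
  assert (0 <= zs (S N) (fun j => g j (- Z.of_nat (S N))%Z + g j (Z.of_nat (S N)))).
  { apply zs_ge0. intros z. pose proof (H z (- Z.of_nat (S N))%Z). pose proof (H z (Z.of_nat (S N))). lra. }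
  assert (0 <= zs N (g (- Z.of_nat (S N))%Z)) by (apply zs_ge0; auto).
  assert (0 <= zs N (g (Z.of_nat (S N)))) by (apply zs_ge0; auto).
  lra.
Qed.

Lemma D_mono N (g : Z -> Z -> R) : (forall j k, 0 <= g j k) -> Dz N g <= Dz (S N) g.
Proof. intros H. rewrite D_S, plusR. pose proof (E_ge0 N g H). lra. Qed.

Lemma D_mult N c (g : Z -> Z -> R) : Dz N (fun j k => c * g j k) = c * Dz N g.
Proof.
  unfold Dz. transitivity (zs N (fun j => c * zs N (g j))).
  - apply zs_ext. intros j. unfold zs. apply (@sum_n_mult_l R_Ring c).
  - unfold zs. apply (@sum_n_mult_l R_Ring c).
Qed.

Lemma D_plus {G : AbelianMonoid} N (g g' : Z -> Z -> G) :
  Dz N (fun j k => plus (g j k) (g' j k)) = plus (Dz N g) (Dz N g').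
Proof.
  unfold Dz. rewrite <- zs_plus. apply zs_ext. intros j. apply zs_plus.
Qed.

Section NormSec2.
Context {K : AbsRing} {V : NormedModule K}.

Lemma D_norm N (h : Z -> Z -> V) : norm (Dz N h) <= Dz N (fun j k => norm (h j k)).
Proof.
  unfold Dz. eapply Rle_trans; [apply zs_norm|]. apply zs_le. intros j. apply zs_norm.
Qed.

Lemma E_norm N (h : Z -> Z -> V) : norm (E N h) <= E N (fun j k => norm (h j k)).
Proof.
  rewrite ER. unfold E.
  eapply Rle_trans; [apply norm_triangle|]. apply Rplus_le_compat.
  - eapply Rle_trans; [apply zs_norm|]. apply zs_le. intros j. apply norm_triangle.
  - eapply Rle_trans; [apply norm_triangle|]. apply Rplus_le_compat; apply zs_norm.
Qed.

Lemma D_cauchy N d (h : Z -> Z -> V) :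
  norm (minus (Dz (N + d) h) (Dz N h)) <= Dz (N + d) (fun j k => norm (h j k)) - Dz N (fun j k => norm (h j k)).
Proof.
  induction d.
  - rewrite Nat.add_0_r. replace (minus (Dz N h) (Dz N h)) with (@zero V) by (symmetry; unfold minus; exact (@plus_opp_r (NormedModule.AbelianGroup K V) _)). rewrite norm_zero. lra.
  - rewrite Nat.add_succ_r, !D_S, plusR.
    replace (minus (plus (Dz (N + d) h) (E (N + d) h)) (Dz N h)) with
      (plus (minus (Dz (N + d) h) (Dz N h)) (E (N + d) h)).
    2:{ unfold minus. rewrite <- !plus_assoc. f_equal. apply plus_comm. }
    eapply Rle_trans; [apply norm_triangle|]. pose proof (E_norm (N + d) h). lra.
Qed.

End NormSec2.

Lemma Rabs_le_d u v : Rabs u <= sqrt (u ^ 2 + v ^ 2).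
Proof.
  rewrite <- sqrt_Rsqr_abs. apply sqrt_le_1_alt. unfold Rsqr. nra.
Qed.

Lemma Cmod_le_sum (z : C) : Cmod z <= Rabs (fst z) + Rabs (snd z).
Proof.
  destruct z as [x y]. unfold Cmod. simpl.
  rewrite <- (sqrt_Rsqr (Rabs x + Rabs y)) by (pose proof (Rabs_pos x); pose proof (Rabs_pos y); lra).
  apply sqrt_le_1_alt. unfold Rsqr.
  pose proof (Rabs_pos x); pose proof (Rabs_pos y).
  assert (x * (x * 1) = Rabs x * Rabs x) by (rewrite <- Rabs_mult; rewrite Rabs_pos_eq; [ring| nra]).
  assert (y * (y * 1) = Rabs y * Rabs y) by (rewrite <- Rabs_mult; rewrite Rabs_pos_eq; [ring| nra]).
  simpl. nra.
Qed.

Lemma cos_lip a b : Rabs (cos a - cos b) <= Rabs (a - b).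
Proof.
  destruct (MVT_abs cos (fun x => - sin x) b a) as [c [Hc _]].
  { intros; apply derivable_pt_lim_cos. }
  rewrite Hc, Rabs_Ropp. pose proof (SIN_bound c).
  assert (Rabs (sin c) <= 1) by (apply Rabs_le; lra).
  pose proof (Rabs_pos (a - b)). nra.
Qed.

Lemma sin_lip a b : Rabs (sin a - sin b) <= Rabs (a - b).
Proof.
  destruct (MVT_abs sin cos b a) as [c [Hc _]].
  { intros; apply derivable_pt_lim_sin. }
  rewrite Hc. pose proof (COS_bound c).
  assert (Rabs (cos c) <= 1) by (apply Rabs_le; lra).
  pose proof (Rabs_pos (a - b)). nra.
Qed.

Lemma Cmod_cexpi a : Cmod (cexpi a) = 1.
Proof.
  unfold Cmod, cexpi. simpl. pose proof (sin2_cos2 a) as Hs. unfold Rsqr in Hs.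
  replace (cos a * (cos a * 1) + sin a * (sin a * 1)) with 1 by lra. apply sqrt_1.
Qed.

Lemma cexpi_diff1 a b : Cmod (Cminus (cexpi a) (cexpi b)) <= 2 * Rabs (a - b).
Proof.
  eapply Rle_trans; [apply Cmod_le_sum|]. unfold cexpi, Cminus, Cplus, Copp. simpl.
  pose proof (cos_lip a b). pose proof (sin_lip a b).
  replace (cos a + - cos b) with (cos a - cos b) by ring.
  replace (sin a + - sin b) with (sin a - sin b) by ring. lra.
Qed.

Lemma cexpi_diff2 a b : Cmod (Cminus (cexpi a) (cexpi b)) <= 2.
Proof.
  unfold Cminus. eapply Rle_trans; [apply Cmod_triangle|].
  rewrite Cmod_opp, !Cmod_cexpi. lra.
Qed.

Lemma rpow_mono u v g : 0 <= g -> 0 <= u <= v -> rpow u g <= rpow v g.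
Proof.
  intros Hg [Hu Huv]. destruct Hu as [Hu|<-].
  - rewrite !rpow_pos by lra. unfold Rpower.
    apply expLe. apply Rmult_le_compat_l; auto. apply ln_le; lra.
  - rewrite rpow_0. apply rpow_ge0.
Qed.

Lemma cexpi_diff a b g : 0 < g <= 1 ->
  Cmod (Cminus (cexpi a) (cexpi b)) <= 2 * rpow (Rabs (a - b)) g.
Proof.
  intros Hg. set (w := Rabs (a - b)).
  destruct (Rle_dec w 0) as [Hw|Hw].
  - assert (a = b).
    { pose proof (Rabs_pos (a-b)). assert (Rabs (a - b) = 0) by (unfold w in Hw; lra).
      apply Rabs_eq_0 in H0. lra. }
    subst b. unfold Cminus. rewrite Cplus_opp_r, Cmod_0. pose proof (rpow_ge0 w g). lra.
  - rewrite rpow_pos by lra.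
    destruct (Rle_dec w 1) as [H1|H1].
    + assert (w <= exp (g * ln w)).
      { rewrite <- (exp_ln w) at 1 by lra. apply expLe.
        assert (ln w <= 0) by (rewrite <- ln_1; apply ln_le; lra). nra. }
      pose proof (cexpi_diff1 a b). fold w in H0. lra.
    + assert (1 <= exp (g * ln w)).
      { rewrite <- exp_0. apply expLe.
        assert (0 <= ln w) by (rewrite <- ln_1; apply ln_le; lra). nra. }
      pose proof (cexpi_diff2 a b). lra.
Qed.

Lemma rpow_mult u v g : 0 <= u -> 0 <= v -> rpow (u * v) g = rpow u g * rpow v g.
Proof.
  intros [Hu|<-] [Hv|<-].
  - rewrite !rpow_pos by nra. rewrite ln_mult by lra. rewrite <- exp_plus. f_equal. ring.
  - rewrite Rmult_0_r, !rpow_0. ring.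
  - rewrite Rmult_0_l, !rpow_0. ring.
  - rewrite Rmult_0_l, !rpow_0. ring.
Qed.

Definition W (e : R) (j k : Z) : R := exp (e * ln (Rabs (IZR (4 * j * j - k * k)))).

Lemma nonres_int j k : resonant j k = false ->
  (1 <= Z.abs (4 * j * j - k * k) /\ 2 * Z.abs j + Z.abs k <= 2 * Z.abs (4 * j * j - k * k))%Z.
Proof.
  unfold resonant. intros H. apply Bool.orb_false_iff in H. destruct H as [H1 H2].
  apply Z.eqb_neq in H1, H2.
  assert (E : (4 * j * j - k * k = (2*j-k) * (2*j+k))%Z) by ring.
  rewrite E, Z.abs_mul.
  assert (1 <= Z.abs (2*j-k))%Z by lia. assert (1 <= Z.abs (2*j+k))%Z by lia.
  assert (2 * Z.abs j + Z.abs k <= Z.abs (2*j-k) + Z.abs (2*j+k))%Z by lia.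
  nia.
Qed.

Lemma pt_holder g j k x t x' t' : 0 < g <= 1 -> resonant j k = false ->
  rpow (Rabs ((2 * IZR j * x + IZR k * t) - (2 * IZR j * x' + IZR k * t'))) g
  <= 2 * W g j k * rpow (sqrt ((x - x') ^ 2 + (t - t') ^ 2)) g.
Proof.
  intros Hg Hr. destruct (nonres_int j k Hr) as [Hm1 Hm2].
  set (d := sqrt ((x - x') ^ 2 + (t - t') ^ 2)).
  set (m := (4 * j * j - k * k)%Z).
  assert (Hd : 0 <= d) by apply sqrt_pos.
  assert (Hx : Rabs (x - x') <= d) by apply Rabs_le_d.
  assert (Ht : Rabs (t - t') <= d) by (unfold d; rewrite Rplus_comm; apply Rabs_le_d).
  assert (Hjk : 2 * Rabs (IZR j) + Rabs (IZR k) <= 2 * Rabs (IZR m)).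
  { rewrite <- !abs_IZR. apply IZR_le in Hm2. rewrite plus_IZR, !mult_IZR in Hm2. exact Hm2. }
  assert (HT : Rabs ((2 * IZR j * x + IZR k * t) - (2 * IZR j * x' + IZR k * t')) <= (2 * Rabs (IZR m)) * d).
  { replace ((2 * IZR j * x + IZR k * t) - (2 * IZR j * x' + IZR k * t')) with
      (2 * IZR j * (x - x') + IZR k * (t - t')) by ring.
    eapply Rle_trans; [apply Rabs_triang|]. rewrite !Rabs_mult.
    rewrite (Rabs_pos_eq 2) by lra.
    pose proof (Rabs_pos (IZR j)). pose proof (Rabs_pos (IZR k)).
    assert (2 * Rabs (IZR j) * Rabs (x - x') + Rabs (IZR k) * Rabs (t - t') <= (2 * Rabs (IZR j) + Rabs (IZR k)) * d) by nra.
    nra. }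
  eapply Rle_trans.
  { apply rpow_mono; [lra|]. split; [apply Rabs_pos| exact HT]. }
  assert (Hm : 0 < Rabs (IZR m)).
  { rewrite <- abs_IZR. apply IZR_lt. lia. }
  rewrite rpow_mult by (try apply Rabs_pos; nra). rewrite rpow_mult by (try apply Rabs_pos; lra).
  rewrite (rpow_pos 2) by lra. rewrite (rpow_pos (Rabs (IZR m))) by lra.
  fold m. unfold W. fold m.
  assert (exp (g * ln 2) <= 2).
  { rewrite <- (exp_ln 2) at 2 by lra. apply expLe.
    assert (0 <= ln 2) by (rewrite <- ln_1; apply ln_le; lra). nra. }
  pose proof (exp_pos (g * ln (Rabs (IZR m)))). pose proof (rpow_ge0 d g). 
  apply Rmult_le_compat_r; auto. apply Rmult_le_compat_r; lra.
Qed.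

Lemma pt_KB p q (f : Z -> Z -> C) e j k : 0 < p -> 0 < q -> / p + / q = 1 ->
  Cmod (uhat f j k) * W e j k <=
  rpow (Cmod (f j k)) q + Gs ((1 - e) * p) (2*j-k)%Z * Gs ((1 - e) * p) (2*j+k)%Z.
Proof.
  intros Hp Hq Hpq.
  pose proof (rpow_ge0 (Cmod (f j k)) q). pose proof (Gs_ge0 ((1 - e) * p) (2*j-k)%Z).
  pose proof (Gs_ge0 ((1 - e) * p) (2*j+k)%Z).
  unfold uhat. destruct (resonant j k) eqn:Hr.
  { rewrite Cmod_0, Rmult_0_l. nra. }
  destruct (nonres_int j k Hr) as [Hm1 _].
  set (z := (4 * j * j - k * k)%Z) in *.
  assert (Hz : IZR z <> 0) by (apply not_0_IZR; lia).
  assert (Hm : 0 < Rabs (IZR z)) by (apply Rabs_pos_lt; auto).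
  rewrite Cmod_div.
  2:{ intros E. apply Hz. apply (f_equal fst) in E. simpl in E. exact E. }
  rewrite Cmod_R. unfold W. fold z.
  replace (Cmod (f j k) / Rabs (IZR z) * exp (e * ln (Rabs (IZR z)))) with
    (Cmod (f j k) * exp ((e - 1) * ln (Rabs (IZR z)))).
  2:{ unfold Rdiv. replace ((e - 1) * ln (Rabs (IZR z))) with (e * ln (Rabs (IZR z)) + - ln (Rabs (IZR z))) by ring.
      rewrite exp_plus, exp_Ropp, exp_ln by lra. ring. }
  eapply Rle_trans; [apply (young p q); auto; apply Cmod_ge_0|].
  apply Rplus_le_compat_l. right.
  unfold resonant in Hr. apply Bool.orb_false_iff in Hr. destruct Hr as [Hr1 Hr2].
  apply Z.eqb_neq in Hr1, Hr2.
  unfold Gs. destruct Z.eq_dec; [lia|]. destruct Z.eq_dec; [lia|].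
  rewrite <- exp_plus. f_equal.
  assert (E : IZR z = IZR (2*j-k) * IZR (2*j+k)) by (rewrite <- mult_IZR; f_equal; unfold z; ring).
  rewrite E, Rabs_mult, ln_mult.
  2,3: apply Rabs_pos_lt; apply not_0_IZR; auto.
  ring.
Qed.

Lemma KB p q (f : Z -> Z -> C) M e : 0 < p -> 0 < q -> / p + / q = 1 ->
  (forall N, Dz N (fun j k => rpow (Cmod (f j k)) q) <= M) -> 1 < (1 - e) * p ->
  forall N, Dz N (fun j k => Cmod (uhat f j k) * W e j k) <= M + (2 + 2 / ((1 - e) * p - 1)) ^ 2.
Proof.
  intros Hp Hq Hpq HM Hs N. set (s := (1 - e) * p) in *.
  eapply Rle_trans.
  { apply D_le. intros j k. apply (pt_KB p q f e j k); auto. }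
  change (Dz N (fun j k => plus (rpow (Cmod (f j k)) q) (Gs s (2*j-k)%Z * Gs s (2*j+k)%Z)) <=
    M + (2 + 2 / (s - 1)) ^ 2).
  rewrite D_plus, plusR. apply Rplus_le_compat; [apply HM|].
  eapply Rle_trans; [apply reindex|].
  pose proof (pseries s (3 * N) Hs). pose proof (zs_ge0 (3*N) (Gs s) (Gs_ge0 s)).
  apply pow_incr. split; assumption.
Qed.

Lemma D_mono_le N M (g : Z -> Z -> R) : (forall j k, 0 <= g j k) -> (N <= M)%nat -> Dz N g <= Dz M g.
Proof.
  intros H HNM. induction HNM; [lra|]. pose proof (D_mono m g H). lra.
Qed.

Lemma C_cauchy (h : Z -> Z -> C) N d :
  Cmod (Cminus (Dz (N + d) h) (Dz N h)) <= Dz (N + d) (fun j k => Cmod (h j k)) - Dz N (fun j k => Cmod (h j k)).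
Proof. apply (D_cauchy N d h). Qed.

Lemma conv_of_bound (h : Z -> Z -> C) B : (forall N, Dz N (fun j k => Cmod (h j k)) <= B) ->
  exists y, filterlim (fun N => Dz N h) eventually (locally y).
Proof.
  intros HB. pose (a := (fun N => Dz N (fun j k => Cmod (h j k))) : nat -> R).
  assert (Ha : forall N M, (N <= M)%nat -> a N <= a M).
  { intros N M HNM. unfold a. apply D_mono_le; [intros; apply Cmod_ge_0| exact HNM]. }
  destruct (completeness (fun r => exists N, r = a N)) as [L [HL1 HL2]].
  { exists B. intros r [N HN]. rewrite HN. unfold a. apply HB. }
  { exists (a 0%nat). exists 0%nat. reflexivity. }
  apply (proj1 (filterlim_locally_cauchy (U := CompleteNormedModule.CompleteSpace _ C_CompleteNormedModule) (F := eventually) (fun N => Dz N h : C))). intros eps.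
  assert (HN0 : exists N0, L - eps < a N0).
  { apply Classical_Prop.NNPP. intros Hn.
    assert (L <= L - eps).
    { apply HL2. intros r [N ->]. apply Rnot_lt_le. intros Hc. apply Hn. exists N. exact Hc. }
    pose proof (cond_pos eps). lra. }
  destruct HN0 as [N0 HN0].
  exists (fun n => (N0 <= n)%nat). split.
  { exists N0. auto. }
  assert (Hc : forall m n, (N0 <= m)%nat -> (m <= n)%nat -> Cmod (Cminus (Dz n h) (Dz m h)) < eps).
  { intros m n Hm Hmn. replace n with (m + (n - m))%nat by lia.
    eapply Rle_lt_trans; [apply C_cauchy|]. change (a (m + (n - m))%nat - a m < eps).
    pose proof (HL1 (a (m + (n - m))%nat) (ex_intro _ _ eq_refl)). pose proof (Ha N0 m Hm). lra. }
  intros u v Hu Hv. apply (@norm_compat1 C_AbsRing (CompleteNormedModule.NormedModule _ C_CompleteNormedModule)).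
  destruct (le_lt_dec u v) as [Huv|Huv].
  - apply Hc; auto.
  - change (norm (minus (Dz v h) (Dz u h))) with (Cmod (Cminus (Dz v h) (Dz u h))).
    replace (Cminus (Dz v h) (Dz u h)) with (Copp (Cminus (Dz u h) (Dz v h))).
    2:{ destruct (Dz v h), (Dz u h). unfold Copp, Cminus, Cplus. simpl. f_equal; ring. }
    rewrite Cmod_opp. apply Hc; lia.
Qed.

Lemma cexpi_periodZ a n : cexpi (a + 2 * IZR n * PI) = cexpi a.
Proof.
  destruct (Z_le_gt_dec 0 n) as [Hn|Hn].
  - replace (IZR n) with (INR (Z.to_nat n)) by (rewrite INR_IZR_INZ, Z2Nat.id; auto).
    unfold cexpi. rewrite cos_period, sin_period. reflexivity.
  - set (m := Z.to_nat (- n)).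
    assert (Hm : INR m = - IZR n) by (unfold m; rewrite INR_IZR_INZ, Z2Nat.id by lia; rewrite opp_IZR; ring).
    unfold cexpi. 
    rewrite <- (cos_period (a + 2 * IZR n * PI) m), <- (sin_period (a + 2 * IZR n * PI) m).
    rewrite Hm. replace (a + 2 * IZR n * PI + 2 * - IZR n * PI) with a by ring. reflexivity.
Qed.

Lemma C3 (A B an bn : C) :
  Cmod (Cminus A B) <= Cmod (Cminus an A) + Cmod (Cminus an bn) + Cmod (Cminus bn B).
Proof.
  replace (Cminus A B) with (Cplus (Copp (Cminus an A)) (Cplus (Cminus an bn) (Cminus bn B))).
  2:{ destruct A, B, an, bn. unfold Cminus, Cplus, Copp. simpl. f_equal; ring. }
  eapply Rle_trans; [apply Cmod_triangle|]. rewrite Cmod_opp.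
  pose proof (Cmod_triangle (Cminus an bn) (Cminus bn B)). lra.
Qed.

Lemma lim_le (a b : nat -> C) A B c :
  filterlim a eventually (locally A) -> filterlim b eventually (locally B) ->
  (forall N, Cmod (Cminus (a N) (b N)) <= c) -> Cmod (Cminus A B) <= c.
Proof.
  intros Ha Hb Hc. apply le_epsilon. intros eps Heps.
  assert (He2 : 0 < eps / 2) by lra.
  pose proof (proj1 (@filterlim_locally_ball_norm C_AbsRing nat (CompleteNormedModule.NormedModule _ C_CompleteNormedModule) eventually _ a A) Ha (mkposreal _ He2)) as [N1 HN1].
  pose proof (proj1 (@filterlim_locally_ball_norm C_AbsRing nat (CompleteNormedModule.NormedModule _ C_CompleteNormedModule) eventually _ b B) Hb (mkposreal _ He2)) as [N2 HN2].
  specialize (HN1 (max N1 N2) ltac:(lia)). specialize (HN2 (max N1 N2) ltac:(lia)).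
  unfold ball_norm in HN1, HN2. simpl in HN1, HN2.
  pose proof (C3 A B (a (max N1 N2)) (b (max N1 N2))). pose proof (Hc (max N1 N2)).
  change (Cmod (Cminus (a (max N1 N2)) A) < eps / 2) in HN1.
  change (Cmod (Cminus (b (max N1 N2)) B) < eps / 2) in HN2.
  lra.
Qed.

Lemma D_multC N (c : C) (g : Z -> Z -> C) : Dz N (fun j k => Cmult c (g j k)) = Cmult c (Dz N g).
Proof.
  unfold Dz. transitivity (zs N (fun j => Cmult c (zs N (g j)))).
  - apply zs_ext. intros j. unfold zs. apply (@sum_n_mult_l C_Ring c).
  - unfold zs. apply (@sum_n_mult_l C_Ring c).
Qed.

Lemma D_minusC N (g g' : Z -> Z -> C) :
  Cminus (Dz N g) (Dz N g') = Dz N (fun j k => Cplus (g j k) (Cmult (RtoC (-1)) (g' j k))).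
Proof.
  transitivity (plus (Dz N g) (Dz N (fun j k => Cmult (RtoC (-1)) (g' j k)))).
  2:{ symmetry. exact (D_plus N g (fun j k => Cmult (RtoC (-1)) (g' j k))). }
  rewrite D_multC. destruct (Dz N g), (Dz N g'). unfold Cminus, Cplus, Cmult, Copp, RtoC. simpl.
  unfold plus. simpl. unfold Cplus. simpl. f_equal; ring.
Qed.

Definition hxt (f : Z -> Z -> C) (x t : R) (j k : Z) : C :=
  Cmult (uhat f j k) (cexpi (2 * IZR j * x + IZR k * t)).

Lemma W0 j k : W 0 j k = 1.
Proof. unfold W. rewrite Rmult_0_l. apply exp_0. Qed.

Lemma hxt_norm f x t j k : Cmod (hxt f x t j k) = Cmod (uhat f j k).
Proof. unfold hxt. rewrite Cmod_mult, Cmod_cexpi. ring. Qed.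

Lemma hxt_diff f x t x' t' g j k : 0 < g <= 1 ->
  Cmod (Cplus (hxt f x t j k) (Cmult (RtoC (-1)) (hxt f x' t' j k))) <=
  (4 * rpow (sqrt ((x - x') ^ 2 + (t - t') ^ 2)) g) * (Cmod (uhat f j k) * W g j k).
Proof.
  intros Hg. unfold hxt.
  set (a := 2 * IZR j * x + IZR k * t). set (b := 2 * IZR j * x' + IZR k * t').
  replace (Cplus (Cmult (uhat f j k) (cexpi a)) (Cmult (RtoC (-1)) (Cmult (uhat f j k) (cexpi b))))
    with (Cmult (uhat f j k) (Cminus (cexpi a) (cexpi b))).
  2:{ destruct (uhat f j k), (cexpi a), (cexpi b). unfold Cmult, Cminus, Cplus, Copp, RtoC. simpl. f_equal; ring. }
  rewrite Cmod_mult.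
  pose proof (rpow_ge0 (sqrt ((x - x') ^ 2 + (t - t') ^ 2)) g).
  pose proof (exp_pos (g * ln (Rabs (IZR (4 * j * j - k * k))))).
  pose proof (Cmod_ge_0 (uhat f j k)).
  destruct (resonant j k) eqn:Hr.
  { unfold uhat at 1. rewrite Hr, Cmod_0, Rmult_0_l. unfold W.
    apply Rmult_le_pos; [lra|]. apply Rmult_le_pos; lra. }
  pose proof (cexpi_diff a b g Hg).
  pose proof (pt_holder g j k x t x' t' Hg Hr). fold a b in H3.
  unfold W in *.
  assert (Cmod (Cminus (cexpi a) (cexpi b)) <= 4 * exp (g * ln (Rabs (IZR (4 * j * j - k * k)))) * rpow (sqrt ((x - x') ^ 2 + (t - t') ^ 2)) g) by lra.
  assert (Cmod (uhat f j k) * Cmod (Cminus (cexpi a) (cexpi b)) <= Cmod (uhat f j k) * (4 * exp (g * ln (Rabs (IZR (4 * j * j - k * k)))) * rpow (sqrt ((x - x') ^ 2 + (t - t') ^ 2)) g)).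
  { apply Rmult_le_compat_l; auto. }
  nra.
Qed.

Theorem mainTheorem2 (p q : R) (f : Z -> Z -> C) :
  0 < p -> 0 < q -> / p + / q = 1 ->
  in_lq_Z2 q f ->
  exists u : R -> R -> C,
    (forall x t : R,
       filterlim (fun N : nat => u_partial f N x t) eventually (locally (u x t))) /\
    (forall gamma : R, 0 < gamma < 1 - / p -> C_gamma gamma u).
Proof.
  intros Hp Hq Hpq [M HM].
  assert (HM' : forall N, Dz N (fun j k => rpow (Cmod (f j k)) q) <= M) by (intros N; exact (HM N)).
  assert (Hpp : p * / p = 1) by (field; lra).
  assert (Hiq : 0 < / q) by (apply Rinv_0_lt_compat; auto).
  assert (Hip : 0 < / p) by (apply Rinv_0_lt_compat; auto).
  assert (Hp1 : 1 < (1 - 0) * p) by nra.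
  pose proof (KB p q f M 0 Hp Hq Hpq HM' Hp1) as HB0.
  set (B0 := M + (2 + 2 / ((1 - 0) * p - 1)) ^ 2) in HB0.
  assert (conv : forall x t, exists y, filterlim (fun N => u_partial f N x t) eventually (locally y)).
  { intros x t. apply (conv_of_bound (hxt f x t) B0). intros N.
    eapply Rle_trans; [|apply (HB0 N)]. apply D_le. intros j k. rewrite hxt_norm, W0. lra. }
  exists (fun x t => proj1_sig (constructive_indefinite_description _ (conv x t))).
  set (u := fun x t => proj1_sig (constructive_indefinite_description _ (conv x t))).
  assert (Hu : forall x t, filterlim (fun N => u_partial f N x t) eventually (locally (u x t))).
  { intros x t. unfold u. exact (proj2_sig (constructive_indefinite_description _ (conv x t))). }
  split; [exact Hu|].
  intros g [Hg1 Hg2].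
  assert (Hg3 : g <= 1) by lra.
  assert (Hs : 1 < (1 - g) * p) by nra.
  pose proof (KB p q f M g Hp Hq Hpq HM' Hs) as HBg.
  set (Bg := M + (2 + 2 / ((1 - g) * p - 1)) ^ 2) in HBg.
  assert (HBg0 : 0 <= Bg).
  { eapply Rle_trans; [|apply (HBg 0%nat)]. apply D_ge0. intros j k.
    apply Rmult_le_pos; [apply Cmod_ge_0| left; apply exp_pos]. }
  assert (Huniq : forall (s : nat -> C) y y', filterlim s eventually (locally y) ->
            filterlim s eventually (locally y') -> y = y').
  { intros s y y' H1 H2.
    exact (@filterlim_locally_unique nat C_AbsRing (CompleteNormedModule.NormedModule _ C_CompleteNormedModule) eventually _ s y y' H1 H2). }
  split; [|split].
  - exists (4 * Bg). split; [lra|]. intros x t x' t'.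
    apply (lim_le (fun N => u_partial f N x t) (fun N => u_partial f N x' t')); try apply Hu.
    intros N. change (Cmod (Cminus (Dz N (hxt f x t)) (Dz N (hxt f x' t'))) <=
        4 * Bg * rpow (sqrt ((x - x') ^ 2 + (t - t') ^ 2)) g).
    rewrite D_minusC.
    eapply Rle_trans; [apply (@D_norm C_AbsRing (CompleteNormedModule.NormedModule _ C_CompleteNormedModule))|].
    eapply Rle_trans.
    { apply D_le. intros j k. apply (hxt_diff f x t x' t' g j k). lra. }
    rewrite D_mult. pose proof (HBg N). 
    pose proof (rpow_ge0 (sqrt ((x - x') ^ 2 + (t - t') ^ 2)) g). nra.
  - intros x t. apply (Huniq (fun N => u_partial f N x t)); [|apply Hu].
    replace (fun N => u_partial f N x t) with (fun N => u_partial f N (x + PI) t); [apply Hu|].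
    apply functional_extensionality. intros N. unfold u_partial. f_equal.
    apply functional_extensionality. intros j. f_equal.
    apply functional_extensionality. intros k. f_equal.
    rewrite <- (cexpi_periodZ (2 * IZR j * x + IZR k * t) j). f_equal. ring.
  - intros x t. apply (Huniq (fun N => u_partial f N x t)); [|apply Hu].
    replace (fun N => u_partial f N x t) with (fun N => u_partial f N x (t + 2 * PI)); [apply Hu|].
    apply functional_extensionality. intros N. unfold u_partial. f_equal.
    apply functional_extensionality. intros j. f_equal.
    apply functional_extensionality. intros k. f_equal.
    rewrite <- (cexpi_periodZ (2 * IZR j * x + IZR k * t) k). f_equal. ring.
Qed.
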